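(* Let $v\in\mathbb{R}^2$ and let $f\in\mathrm{CPA}_3$ be a $v$-function with three pieces. Then there are signs $\sigma_1,\sigma_2\in\{-1,1\}$ and functions $g_1,g_2,g_3$, each of which is an affine component of $f$ multiplied by $-1$ or $1$, such that $$f=\sigma_1\max\big(g_1,\sigma_2\max(g_2,g_3)\big).$$
   Context: For $v,u\in\mathbb{R}^2$, $u\ne0$: a line segment $\{v+tu:t\in[0,1]\}$, a ray $\{v+tu:t\ge0\}$ (vertex $v$), a line $\{v+tu:t\in\mathbb{R}\}$. A polygon is a closed $P\subseteq\mathbb{R}^2$ with connected interior whose boundary is the union of finitely many polygonal arcs and cycles (piecewise-linear curves built from segments, rays and lines, homeomorphic to a line or circle), any two meeting in the empty set or a common vertex. A continuous $f:\mathbb{R}^2\to\mathbb{R}$ is continuous piecewise affine (CPA) with admissible pieces $\mathcal{P}$ if $\mathcal{P}$ is a finite set of polygons covering $\mathbb{R}^2$, $P\cap Q=\partial P\cap\partial Q$ for distinct pieces, every vertex of a piece is a vertex of every piece containing it, and $f|_P=f_P$ is affine for each $P$; $f_P$ is the affine component of $P$. $\mathrm{CPA}_3$ is the set of CPA functions admitting an admissible set of $3$ pieces. A CPA function is a $v$-function if $v$ is its only vertex and all its edges are rays. *)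

(* Defs.v *)
From HB Require Import structures.
From mathcomp Require Import all_boot all_order all_algebra.
From mathcomp Require Import all_classical all_reals all_analysis.
Set Implicit Arguments. Unset Strict Implicit. Unset Printing Implicit Defensive.
Import Order.TTheory GRing.Theory Num.Theory.
Import numFieldNormedType.Exports.
Local Open Scope classical_set_scope.
Local Open Scope ring_scope.

Section Defs.
Variable R : realType.
Notation pt := (R * R)%type.

(* the ray {v + t u : t >= 0} with vertex v (u <> 0 required separately) *)
Definition ray (v u : pt) : set pt :=
  [set x | exists2 t : R, 0 <= t & x = (v.1 + t * u.1, v.2 + t * u.2)].

Definition bdry (A : set pt) : set pt := closure A `\` A°.

Definition is_affine (g : pt -> R) : Prop :=
  exists a b c : R, forall x, g x = a * x.1 + b * x.2 + c.

(* A polygon whose boundary consists of finitely many polygonal arcs, each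
   being the union of two distinct rays with vertex v (so v is the only vertex
   and all edges are rays), any two arcs meeting only in the vertex v. *)
Definition v_polygon (v : pt) (P : set pt) : Prop :=
  closed P /\ P° !=set0 /\ connected P° /\
  exists (n : nat) (u w : 'I_n -> pt),
    (forall k, u k != (0, 0) /\ w k != (0, 0) /\ ray v (u k) != ray v (w k)) /\
    (forall k l, k != l ->
       (ray v (u k) `|` ray v (w k)) `&` (ray v (u l) `|` ray v (w l)) = [set v]) /\
    bdry P = \bigcup_(k in [set: 'I_n]) (ray v (u k) `|` ray v (w k)).

Definition v_function3 (v : pt) (f : pt -> R)
    (P : 'I_3 -> set pt) (F : 'I_3 -> pt -> R) : Prop :=
  continuous f /\
  (forall i, v_polygon v (P i)) /\
  \bigcup_(i in [set: 'I_3]) P i = [set: pt] /\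
  (forall i j, i != j -> P i `&` P j = bdry (P i) `&` bdry (P j)) /\
  (forall i, is_affine (F i) /\ forall x, P i x -> f x = F i x).

Definition signed_comp (F : 'I_3 -> pt -> R) (g : pt -> R) : Prop :=
  exists (i : 'I_3) (e : R), (e = 1 \/ e = -1) /\ forall x, g x = e * F i x.

End Defs.

(* Main.v *)
Require Import Defs.
From HB Require Import structures.
From mathcomp Require Import all_boot all_order all_algebra.
From mathcomp Require Import all_classical all_reals all_analysis.
From mathcomp Require Import ring lra.
Import Order.TTheory GRing.Theory Num.Theory.
Import numFieldNormedType.Exports.
Local Open Scope classical_set_scope.
Local Open Scope ring_scope.
Section S1D.
Variable R : realType.

Lemma near_ball (s : R) (Q : R -> Prop) : (\forall t \near s, Q t) ->
  exists2 e : R, 0 < e & forall t, `|s - t| < e -> Q t.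
Proof.
move/nbhs_ballP => [e e0 He]; exists e => // t st; apply: He; by [].

Qed.

Lemma L1D (phi : R -> R) (l : 'I_3 -> R -> R) :
  continuous phi -> (forall k, continuous (l k)) ->
  (forall k t, l k t = l k 0 + t * (l k 1 - l k 0)) ->
  (forall t, exists k, phi t = l k t) ->
  exists k, l k 0 <= phi 0 /\ phi 1 <= l k 1.
Proof.
move=> cphi cl laff cov.
pose E := [set t : R | 0 <= t <= 1 /\ exists k, l k 0 <= phi 0 /\ phi t <= l k t].
have E0 : E 0.
  split; first by rewrite lexx ler01.
  by have [k hk] := cov 0; exists k; rewrite hk lexx.
have ub : ubound E 1 by move=> t [/andP[]].
have hs : has_sup E by split; [exists 0 | exists 1].
pose s := sup E.
have s0 : 0 <= s by apply: (sup_upper_bound hs).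
have s1 : s <= 1 by apply: ge_sup => //; exists 0.
have Es : E s.
  apply: contrapT => nEs.
  have nk : forall k, l k 0 <= phi 0 -> l k s < phi s.
    move=> k hk; rewrite ltNge; apply/negP => hle; apply: nEs.
    by split; [rewrite s0 s1 | exists k].
  have : \forall t \near s, forall k, l k 0 <= phi 0 -> l k t < phi t.
    apply: (@filter_forall _ _ (fun k t => l k 0 <= phi 0 -> l k t < phi t) (nbhs s) _) => k.
    have [hk|hk] := boolP (l k 0 <= phi 0); last by near=> t => h; move/negP: hk.
    have c : (fun t => phi t - l k t) @ s --> phi s - l k s.
      by apply: cvgB; [exact: cphi | exact: cl].
    have := cvgr_gt _ c; move=> /(_ _ 0); rewrite subr_gt0 => /(_ (nk k hk)).
    by apply: filterS => t; rewrite subr_gt0 => ? _.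
  move=> /near_ball [e e0 He].
  have [t Et st] := sup_adherent e0 hs.
  have ts : t <= s := sup_upper_bound hs Et.
  move: Et => [_ [k [hk hle]]].
  have : `|s - t| < e by rewrite ger0_norm ?subr_ge0 // ltrBlDr addrC -ltrBlDr.
  by move=> /He /(_ k hk); rewrite ltNge hle.
have s_eq1 : s = 1.
  apply/eqP; rewrite eq_le s1 /=; apply: contrapT => /negP; rewrite -ltNge => slt1.
  case: Es => _ [k0 [hk0 hle0]].
  have after : forall t, s < t -> t <= 1 -> forall k, l k 0 <= phi 0 -> l k t < phi t.
    move=> t st t1 k hk; rewrite ltNge; apply/negP => hle.
    have : t <= s by apply: (sup_upper_bound hs); split; [rewrite t1 andbT; apply: le_trans (ltW st) | exists k].
    by rewrite leNgt st.
  have : \forall t \near s, forall k, s < t -> t <= 1 -> phi t != l k t.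
    apply: (@filter_forall _ _ (fun k t => s < t -> t <= 1 -> phi t != l k t) (nbhs s) _) => k.
    have [hk|hk] := boolP (l k 0 <= phi 0).
      near=> t => st t1; rewrite neq_lt; apply/orP; right; exact: after.
    have [hks|hks] := eqVneq (l k s) (phi s).
      near=> t => st t1; rewrite neq_lt; apply/orP; right.
      apply: (lt_trans _ (after t st t1 k0 hk0)).
      move: hk; rewrite -ltNge => hk.
      have e1 := laff k t; have e2 := laff k0 t; have e3 := laff k s; have e4 := laff k0 s.
      rewrite hks in e3.
      set a := l k 0 in hk e1 e3 *; set b := l k 1 in e1 e3 *.
      set a0 := l k0 0 in hk0 e2 e4 *; set b0 := l k0 1 in e2 e4 *.
      rewrite e1 e2.
      have hd : (b - a) - (b0 - a0) < 0.
        rewrite e3 e4 in hle0. nra.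
      nra.
    have c : (fun t => phi t - l k t) @ s --> phi s - l k s.
      by apply: cvgB; [exact: cphi | exact: cl].
    have := cvgr_neq0 _ c; rewrite subr_eq0 eq_sym => /(_ _ hks).
    by apply: filterS => t; rewrite subr_eq0 => ? _ _.
  move=> /near_ball [e e0 He].
  set m := Num.min e (1 - s).
  have m0 : 0 < m by rewrite lt_min e0 subr_gt0.
  have me : m <= e by rewrite ge_min lexx.
  have m1 : m <= 1 - s by rewrite ge_min lexx orbT.
  pose t := s + m / 2.
  have st : s < t by rewrite /t; lra.
  have t1 : t <= 1 by rewrite /t; lra.
  have [k hk] := cov t.
  have : `|s - t| < e by rewrite ler0_norm /t; lra.
  by move=> /He /(_ k st t1); rewrite hk eqxx.
case: Es => _ [k [hk hle]]; exists k; split => //; by rewrite -s_eq1.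
Unshelve. all: by end_near.
Qed.
End S1D.
Section Comb.
Variable R : realType.
Variable T : Type.
Implicit Types f A B C g : T -> R.

Definition sc A B C g := exists e : R, (e = 1 \/ e = -1) /\
  ((forall x, g x = e * A x) \/ (forall x, g x = e * B x) \/ (forall x, g x = e * C x)).
Definition good3 f A B C := exists (s1 s2 : R) (g1 g2 g3 : T -> R),
  (s1 = 1 \/ s1 = -1) /\ (s2 = 1 \/ s2 = -1) /\ sc A B C g1 /\ sc A B C g2 /\ sc A B C g3 /\
  forall x, f x = s1 * Num.max (g1 x) (s2 * Num.max (g2 x) (g3 x)).
Definition cov3 f A B C := forall x, f x = A x \/ f x = B x \/ f x = C x.
Definition L3 f A B C := forall x y, (A x <= f x /\ f y <= A y) \/
  (B x <= f x /\ f y <= B y) \/ (C x <= f x /\ f y <= C y).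

Ltac maxcase := repeat match goal with |- context [Num.max ?u ?v] =>
  lazymatch u with context [Num.max _ _] => fail | _ =>
  lazymatch v with context [Num.max _ _] => fail | _ => case: (leP u v) => ? end end end.

Lemma scA A B C : sc A B C A. Proof. by exists 1; split; [left|left => x; rewrite mul1r]. Qed.
Lemma scB A B C : sc A B C B. Proof. by exists 1; split; [left|right; left => x; rewrite mul1r]. Qed.
Lemma scC A B C : sc A B C C. Proof. by exists 1; split; [left|right; right => x; rewrite mul1r]. Qed.
Lemma scNA A B C : sc A B C (fun x => - A x). Proof. by exists (-1); split; [right|left => x; rewrite mulN1r]. Qed.
Lemma scNB A B C : sc A B C (fun x => - B x). Proof. by exists (-1); split; [right|right; left => x; rewrite mulN1r]. Qed.
Lemma scNC A B C : sc A B C (fun x => - C x). Proof. by exists (-1); split; [right|right; right => x; rewrite mulN1r]. Qed.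

Lemma UP f A B C : cov3 f A B C -> L3 f A B C -> (forall x, f x <= A x) -> good3 f A B C.
Proof.
move=> cov L hA.
have [[y [hBy hCy]]|n1] := pselect (exists y, B y < f y /\ C y < f y).
  have hA' : forall x, A x <= f x.
    move=> x; case: (L x y) => [[]//|[[_ h]|[_ h]]]; lra.
  exists 1, 1, A, A, A; do 5 (split; first by (try left; try exact: scA)).
  by move=> x; rewrite !mul1r !maxxx; apply/eqP; rewrite eq_le hA hA'.
have n1' : forall y, f y <= B y \/ f y <= C y.
  move=> y; case: (lerP (f y) (B y)) => hb; [by left|right].
  case: (lerP (f y) (C y)) => hc //; case: n1; by exists y.
have [[yb hb]|nb] := pselect (exists y, C y < f y);
have [[yc hc]|nc] := pselect (exists y, B y < f y).
- have lb : forall x, A x <= f x \/ B x <= f x.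
    move=> x; case: (L x yb) => [[h _]|[[h _]|[_ h]]]; [by left|by right|lra].
  have lc : forall x, A x <= f x \/ C x <= f x.
    move=> x; case: (L x yc) => [[h _]|[[_ h]|[h _]]]; [by left|lra|by right].
  exists (-1), (-1), (fun x => - A x), B, C.
  do 2 (split; first by right).
  split; first exact: scNA. split; first exact: scB. split; first exact: scC.
  move=> x; have := hA x; have := n1' x; have := lb x; have := lc x.
  maxcase; move=> [?|?] [?|?] [?|?] ?; lra.
- have lb : forall x, A x <= f x \/ B x <= f x.
    move=> x; case: (L x yb) => [[h _]|[[h _]|[_ h]]]; [by left|by right|lra].
  have hB : forall x, f x <= B x.
    move=> x; rewrite leNgt; apply/negP => h; apply: nc; by exists x.
  exists (-1), 1, (fun x => - A x), (fun x => - B x), (fun x => - B x).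
  split; first by right. split; first by left.
  split; first exact: scNA. split; first exact: scNB. split; first exact: scNB.
  move=> x; have := hA x; have := hB x; have := lb x.
  maxcase; move=> [?|?] ? ?; lra.
- have lc : forall x, A x <= f x \/ C x <= f x.
    move=> x; case: (L x yc) => [[h _]|[[_ h]|[h _]]]; [by left|lra|by right].
  have hC : forall x, f x <= C x.
    move=> x; rewrite leNgt; apply/negP => h; apply: nb; by exists x.
  exists (-1), 1, (fun x => - A x), (fun x => - C x), (fun x => - C x).
  split; first by right. split; first by left.
  split; first exact: scNA. split; first exact: scNC. split; first exact: scNC.
  move=> x; have := hA x; have := hC x; have := lc x.
  maxcase; move=> [?|?] ? ?; lra.
- have hB : forall x, f x <= B x.
    move=> x; rewrite leNgt; apply/negP => h; apply: nc; by exists x.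
  have hC : forall x, f x <= C x.
    move=> x; rewrite leNgt; apply/negP => h; apply: nb; by exists x.
  exists (-1), 1, (fun x => - A x), (fun x => - B x), (fun x => - C x).
  split; first by right. split; first by left.
  split; first exact: scNA. split; first exact: scNB. split; first exact: scNC.
  move=> x; have := hA x; have := hB x; have := hC x; have := cov x.
  maxcase; move=> [?|[?|?]] ? ? ?; lra.
Qed.

Lemma sc_perm12 A B C g : sc B A C g -> sc A B C g.
Proof. by move=> [e [he [h|[h|h]]]]; exists e; split => //; tauto. Qed.
Lemma sc_perm13 A B C g : sc C B A g -> sc A B C g.
Proof. by move=> [e [he [h|[h|h]]]]; exists e; split => //; tauto. Qed.
Lemma good3_perm12 f A B C : good3 f B A C -> good3 f A B C.
Proof.
move=> [s1 [s2 [g1 [g2 [g3 [h1 [h2 [h3 [h4 [h5 h6]]]]]]]]]].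
by exists s1, s2, g1, g2, g3; do 2 split => //; do 3 (split; first exact: sc_perm12).
Qed.
Lemma good3_perm13 f A B C : good3 f C B A -> good3 f A B C.
Proof.
move=> [s1 [s2 [g1 [g2 [g3 [h1 [h2 [h3 [h4 [h5 h6]]]]]]]]]].
by exists s1, s2, g1, g2, g3; do 2 split => //; do 3 (split; first exact: sc_perm13).
Qed.
Lemma cov3_perm12 f A B C : cov3 f A B C -> cov3 f B A C.
Proof. by move=> h x; have := h x; tauto. Qed.
Lemma cov3_perm13 f A B C : cov3 f A B C -> cov3 f C B A.
Proof. by move=> h x; have := h x; tauto. Qed.
Lemma L3_perm12 f A B C : L3 f A B C -> L3 f B A C.
Proof. by move=> h x y; have := h x y; tauto. Qed.
Lemma L3_perm13 f A B C : L3 f A B C -> L3 f C B A.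
Proof. by move=> h x y; have := h x y; tauto. Qed.

Definition ng (g : T -> R) := fun x => - g x.
Lemma sc_neg A B C g : sc (ng A) (ng B) (ng C) g -> sc A B C g.
Proof.
move=> [e [he h]]; exists (- e); split.
  by case: he => ->; [right|left; rewrite opprK].
by rewrite /ng in h; case: h => [h|[h|h]]; [left|right;left|right;right] => x; rewrite h mulrN mulNr.
Qed.
Lemma good3_neg f A B C : good3 (ng f) (ng A) (ng B) (ng C) -> good3 f A B C.
Proof.
move=> [s1 [s2 [g1 [g2 [g3 [h1 [h2 [h3 [h4 [h5 h6]]]]]]]]]].
exists (- s1), s2, g1, g2, g3; split.
  by case: h1 => ->; [right|left; rewrite opprK].
split => //; do 3 (split; first exact: sc_neg).
by move=> x; have := h6 x; rewrite /ng mulNr => <-; rewrite opprK.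
Qed.
Lemma cov3_neg f A B C : cov3 f A B C -> cov3 (ng f) (ng A) (ng B) (ng C).
Proof. by move=> h x; rewrite /ng; case: (h x) => [->|[->|->]]; tauto. Qed.
Lemma L3_neg f A B C : L3 f A B C -> L3 (ng f) (ng A) (ng B) (ng C).
Proof. by move=> h x y; rewrite /ng !lerN2; have := h y x; tauto. Qed.

Lemma LOW f A B C : cov3 f A B C -> L3 f A B C -> (forall x, A x <= f x) -> good3 f A B C.
Proof.
move=> cov L hA; apply: good3_neg; apply: UP.
- exact: cov3_neg.
- exact: L3_neg.
- by move=> x; rewrite /ng lerN2.
Qed.

Lemma core f A B C : cov3 f A B C -> L3 f A B C ->
  ((forall x, ~ (f x < A x /\ f x < B x) /\ ~ (f x < A x /\ f x < C x) /\ ~ (f x < B x /\ f x < C x)) ->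
   (forall x, ~ (A x < f x /\ B x < f x) /\ ~ (A x < f x /\ C x < f x) /\ ~ (B x < f x /\ C x < f x)) ->
   (exists y, A y < f y) -> (exists z, f z < A z) -> False) ->
  good3 f A B C.
Proof.
move=> cov L geo.
have [[x0 [h1 h2]]|n1] := pselect (exists x, B x < f x /\ C x < f x).
  apply: LOW => // z; case: (L z x0) => [[]//|[[_ h]|[_ h]]]; lra.
have [[x0 [h1 h2]]|n2] := pselect (exists x, A x < f x /\ C x < f x).
  apply: good3_perm12; apply: LOW; [exact: cov3_perm12|exact: L3_perm12|].
  move=> z; case: (L z x0) => [[_ h]|[[]//|[_ h]]]; lra.
have [[x0 [h1 h2]]|n3] := pselect (exists x, A x < f x /\ B x < f x).
  apply: good3_perm13; apply: LOW; [exact: cov3_perm13|exact: L3_perm13|].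
  move=> z; case: (L z x0) => [[_ h]|[[_ h]|[]//]]; lra.
have [[x0 [h1 h2]]|n4] := pselect (exists x, f x < B x /\ f x < C x).
  apply: UP => // z; case: (L x0 z) => [[]//|[[h _]|[h _]]]; lra.
have [[x0 [h1 h2]]|n5] := pselect (exists x, f x < A x /\ f x < C x).
  apply: good3_perm12; apply: UP; [exact: cov3_perm12|exact: L3_perm12|].
  move=> z; case: (L x0 z) => [[h _]|[[]//|[h _]]]; lra.
have [[x0 [h1 h2]]|n6] := pselect (exists x, f x < A x /\ f x < B x).
  apply: good3_perm13; apply: UP; [exact: cov3_perm13|exact: L3_perm13|].
  move=> z; case: (L x0 z) => [[h _]|[[h _]|[]//]]; lra.
have [hup|nup] := pselect (forall x, f x <= A x); first exact: UP.
have [hlo|nlo] := pselect (forall x, A x <= f x); first exact: LOW.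
exfalso; apply: geo.
- move=> x; split; [move=> h; apply: n6|split; [move=> h; apply: n5|move=> h; apply: n4]]; by exists x.
- move=> x; split; [move=> h; apply: n3|split; [move=> h; apply: n2|move=> h; apply: n1]]; by exists x.
- apply: contrapT => hn; apply: nup => x; rewrite leNgt; apply/negP => h; apply: hn; by exists x.
- apply: contrapT => hn; apply: nlo => x; rewrite leNgt; apply/negP => h; apply: hn; by exists x.
Qed.
End Comb.
Section Geo.
Variable R : realType.
Notation pt := (R * R)%type.

Lemma aff_cont (a b c : R) : continuous (fun x : pt => a * x.1 + b * x.2 + c).
Proof.
move=> x; apply: cvgD; last exact: cvg_cst.
by apply: cvgD; apply: cvgMr; [exact: cvg_fst | exact: cvg_snd].
Qed.

Lemma line_cont (x w : pt) : continuous (fun t : R => (x.1 + t * w.1, x.2 + t * w.2)).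
Proof.
move=> t.
have h1 : (fun s : R => x.1 + s * w.1) @ t --> x.1 + t * w.1.
  by apply: cvgD; [exact: cvg_cst| apply: cvgMl; exact: cvg_id].
have h2 : (fun s : R => x.2 + s * w.2) @ t --> x.2 + t * w.2.
  by apply: cvgD; [exact: cvg_cst| apply: cvgMl; exact: cvg_id].
exact: (cvg_pair h1 h2).
Qed.

Lemma affine_cont (g : pt -> R) : is_affine g -> continuous g.
Proof.
move=> [a [b [c h]]]; have -> : g = (fun x : pt => a * x.1 + b * x.2 + c).
  by apply: funext => x; rewrite h.
exact: aff_cont.
Qed.

Lemma aff_seg (g : pt -> R) (x z : pt) (t : R) : is_affine g ->
  g (x.1 + t * (z.1 - x.1), x.2 + t * (z.2 - x.2)) = (1 - t) * g x + t * g z.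
Proof. by move=> [a [b [c h]]]; rewrite !h /=; ring. Qed.

Lemma aff_refl (g : pt -> R) (v x : pt) : is_affine g ->
  g (2 * v.1 - x.1, 2 * v.2 - x.2) = 2 * g v - g x.
Proof. by move=> [a [b [c h]]]; rewrite !h /=; ring. Qed.

Lemma near_line (A : set pt) (x w : pt) : nbhs x A ->
  exists t : R, 0 < t < 1 /\ A (x.1 + t * w.1, x.2 + t * w.2).
Proof.
move=> hA.
have e0 : (x.1 + 0 * w.1, x.2 + 0 * w.2) = x by rewrite !mul0r !addr0; case: x {hA}.
have hA' : nbhs (x.1 + 0 * w.1, x.2 + 0 * w.2) A by rewrite e0.
have := line_cont x w 0 A hA' => /near_ball [e ep He].
set m := Num.min e 1.
have m0 : 0 < m by rewrite lt_min ep ltr01.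
have me : m <= e by rewrite ge_min lexx.
have m1 : m <= 1 by rewrite ge_min lexx orbT.
exists (m / 2); split; first by apply/andP; split; lra.
apply: He; rewrite sub0r normrN ger0_norm; lra.
Qed.

Lemma open_pos (g : pt -> R) : continuous g -> open [set x | 0 < g x].
Proof. move=> cg; exact: (@open_comp _ _ g [set r : R | 0 < r] (fun x _ => cg x) (@open_gt R 0)). Qed.
Lemma open_neg (g : pt -> R) : continuous g -> open [set x | g x < 0].
Proof. move=> cg; exact: (@open_comp _ _ g [set r : R | r < 0] (fun x _ => cg x) (@open_lt R 0)). Qed.
Lemma closed_nneg (g : pt -> R) : continuous g -> closed [set x | 0 <= g x].
Proof. move=> cg; exact: (@closed_comp _ _ g [set r : R | 0 <= r] (fun x _ => cg x) (@closed_ge R 0)). Qed.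


Lemma selL (f : pt -> R) (F : 'I_3 -> pt -> R) : continuous f ->
  (forall i, is_affine (F i)) -> (forall x, exists i, f x = F i x) ->
  forall x y, exists k, F k x <= f x /\ f y <= F k y.
Proof.
move=> fc Fa cov x y.
pose p t := (x.1 + t * (y.1 - x.1), x.2 + t * (y.2 - x.2)).
have pc : continuous p := line_cont x (y.1 - x.1, y.2 - x.2).
have p0 : p 0 = x by rewrite /p !mul0r !addr0; case: (x).
have p1 : p 1 = y by rewrite /p !mul1r ![x.1 + _]addrC ![x.2 + _]addrC !subrK; case: (y).
have [] := @L1D R (f \o p) (fun k => F k \o p).
- by move=> t; apply: continuous_comp; [exact: pc | exact: fc].
- by move=> k t; apply: continuous_comp; [exact: pc | exact: affine_cont].
- by move=> k t /=; rewrite /p (aff_seg _ _ _ _ (Fa k)) (aff_seg _ _ _ _ (Fa k)) (aff_seg _ _ _ _ (Fa k)); ring.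
- by move=> t; have [k hk] := cov (p t); exists k.
by move=> k [h0 h1]; exists k; move: h0 h1; rewrite /= p0 p1.
Qed.

Definition i1 : 'I_3 := @Ordinal 3 1 isT.
Definition i2 : 'I_3 := @Ordinal 3 2 isT.

Lemma ord3 (i : 'I_3) : i = ord0 \/ i = i1 \/ i = i2.
Proof. by case: i => [[|[|[|m]]] Hm]; [left|right;left|right;right|done]; apply: val_inj. Qed.


Lemma v_in (v : pt) f P F : v_function3 v f P F -> forall i, P i v.
Proof.
move=> [fc [Pp [Pcov [Pint Faff]]]] i.
have [Pcl [[x0 hx0] [_ [n [u [w [_ [_ Hb]]]]]]]] := Pp i.
case: n u w Hb => [|n] u w Hb; last first.
  have hb : bdry (P i) v.
    rewrite Hb; exists ord0 => //; left; exists 0 => //.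
    by rewrite !mul0r !addr0; case: (v).
  by rewrite (closure_id (P i)).1 //; case: hb.
exfalso.
have b0 : forall x, ~ bdry (P i) x by move=> x; rewrite Hb => -[[k Hk] _].
have Po : forall x, P i x -> (P i)° x.
  move=> x Px; apply: contrapT => nx; apply: (b0 x); split => //; exact: subset_closure.
have Popen : open (P i).
  rewrite interior_id; apply/seteqP; split => x; [exact: interior_subset | exact: Po].
pose j : 'I_3 := if i == ord0 then i1 else ord0.
have hj : i != j by rewrite /j; case: (ord3 i) => [->|[->|->]].
have [_ [[b hb] _]] := Pp j.
have Pjb := interior_subset hb.
have nPib : ~ P i b.
  move=> Pib; have : (P i `&` P j) b by [].
  by rewrite Pint // => -[/b0].
have Pia := interior_subset hx0.
pose q t := (x0.1 + t * (b.1 - x0.1), x0.2 + t * (b.2 - x0.2)).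
have qc : continuous q := line_cont x0 (b.1 - x0.1, b.2 - x0.2).
have q0 : q 0 = x0 by rewrite /q !mul0r !addr0; case: (x0).
have q1 : q 1 = b by rewrite /q !mul1r ![x0.1 + _]addrC ![x0.2 + _]addrC !subrK; case: (b).
have Sc : connected (q @` `[0, 1]).
  apply: connected_continuous_connected; first exact: segment_connected.
  exact: continuous_subspaceT.
have eqS : (q @` `[0, 1]) `&` P i = q @` `[0, 1].
  apply: Sc.
  - by exists x0; split => //; exists 0 => //; rewrite /= in_itv /= lexx ler01.
  - by exists (P i).
  - by exists (P i).
apply: nPib.
have : (q @` `[0, 1]) b by exists 1 => //; rewrite /= in_itv /= lexx ler01.
by rewrite -eqS => -[].
Qed.


Lemma nz_gen (P0 : set pt) (Da Db : pt -> R) (y z : pt) :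
  (forall x z t, Da (x.1 + t * (z.1 - x.1), x.2 + t * (z.2 - x.2)) = (1 - t) * Da x + t * Da z) ->
  (forall x z t, Db (x.1 + t * (z.1 - x.1), x.2 + t * (z.2 - x.2)) = (1 - t) * Db x + t * Db z) ->
  Da y < 0 -> Db y < 0 -> 0 < Da z -> 0 < Db z ->
  (forall x, P0 x -> ~ (Da x < 0 /\ Db x < 0) /\ ~ (0 < Da x /\ 0 < Db x)) ->
  forall x, P0° x -> Da x != 0.
Proof.
move=> sa sb ay by_ az bz onP x hx; apply/negP => /eqP h0.
case: (lerP 0 (Db x)) => hb.
  have [t [/andP [t0 t1] Pq]] := @near_line _ _ (z.1 - x.1, z.2 - x.2) hx.
  have [_ []] := onP _ Pq; rewrite sa sb h0; split; nra.
have [t [/andP [t0 t1] Pq]] := @near_line _ _ (y.1 - x.1, y.2 - x.2) hx.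
have [[]] := onP _ Pq; rewrite sa sb h0; split; nra.
Qed.

Lemma geo_contra (v : pt) f P F : v_function3 v f P F ->
  (forall x, ~ (f x < F ord0 x /\ f x < F i1 x) /\ ~ (f x < F ord0 x /\ f x < F i2 x) /\ ~ (f x < F i1 x /\ f x < F i2 x)) ->
  (forall x, ~ (F ord0 x < f x /\ F i1 x < f x) /\ ~ (F ord0 x < f x /\ F i2 x < f x) /\ ~ (F i1 x < f x /\ F i2 x < f x)) ->
  (exists y, F ord0 y < f y) -> (exists z, f z < F ord0 z) -> False.
Proof.
move=> hv NA NB [y hy] [z hz].
have vin := @v_in v f P F hv.
case: hv => [fc [Pp [Pcov [Pint Faff]]]].
have fv : forall i, F i v = f v by move=> i; rewrite ((Faff i).2 v (vin i)).
have Fa : forall i, is_affine (F i) by move=> i; exact: (Faff i).1.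
pose D1 x := F ord0 x - F i1 x.
pose D2 x := F ord0 x - F i2 x.
have s1 : forall x z t, D1 (x.1 + t * (z.1 - x.1), x.2 + t * (z.2 - x.2)) = (1 - t) * D1 x + t * D1 z.
  by move=> x z' t; rewrite /D1 !aff_seg //; ring.
have s2 : forall x z t, D2 (x.1 + t * (z.1 - x.1), x.2 + t * (z.2 - x.2)) = (1 - t) * D2 x + t * D2 z.
  by move=> x z' t; rewrite /D2 !aff_seg //; ring.
have [y1 y2] : D1 y < 0 /\ D2 y < 0.
  have [n1 [n2 _]] := NB y.
  have hb : f y <= F i1 y by rewrite leNgt; apply/negP => h; apply: n1.
  have hc : f y <= F i2 y by rewrite leNgt; apply/negP => h; apply: n2.
  by rewrite /D1 /D2; split; lra.
have [z1 z2] : 0 < D1 z /\ 0 < D2 z.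
  have [n1 [n2 _]] := NA z.
  have hb : F i1 z <= f z by rewrite leNgt; apply/negP => h; apply: n1.
  have hc : F i2 z <= f z by rewrite leNgt; apply/negP => h; apply: n2.
  by rewrite /D1 /D2; split; lra.
have onP : forall x, P ord0 x -> ~ (D1 x < 0 /\ D2 x < 0) /\ ~ (0 < D1 x /\ 0 < D2 x).
  move=> x Px; have fx := (Faff ord0).2 x Px.
  have [_ [_ n1]] := NA x; have [_ [_ n2]] := NB x.
  rewrite /D1 /D2; split => -[h1 h2]; [apply: n1|apply: n2]; split; lra.
have nz : forall x, (P ord0)° x -> D1 x != 0 /\ D2 x != 0.
  move=> x hx; split.
    exact: (@nz_gen (P ord0) D1 D2 y z s1 s2 y1 y2 z1 z2 onP x hx).
  apply: (@nz_gen (P ord0) D2 D1 y z s2 s1 y2 y1 z2 z1 _ x hx).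
  move=> xx Pxx; case: (onP xx Pxx) => oa ob; split => -[h1 h2]; [apply: oa|apply: ob]; by split.
have W : forall x, D1 x * D2 x < 0 -> P ord0 x.
  move=> x hx.
  have : (\bigcup_(i in [set: 'I_3]) P i) x by rewrite Pcov.
  case=> j _ Pj; have fx := (Faff j).2 x Pj.
  case: (ord3 j) => [ej|[ej|ej]]; rewrite ej in Pj fx => //; exfalso.
    have [_ [n1 _]] := NA x; have [_ [n2 _]] := NB x.
    move: hx; rewrite /D1 /D2 => hx.
    case: (ltrgtP (F ord0 x) (F i1 x)) => h1.
    - have h2 : 0 < F ord0 x - F i2 x by nra.
      by apply: n2; split; lra.
    - have h2 : F ord0 x - F i2 x < 0 by nra.
      by apply: n1; split; lra.
    - by move: hx; rewrite h1 subrr mul0r ltxx.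
  have [n1 _] := NA x; have [n2 _] := NB x.
  move: hx; rewrite /D1 /D2 => hx.
  case: (ltrgtP (F ord0 x) (F i2 x)) => h1.
  - have h2 : 0 < F ord0 x - F i1 x by nra.
    by apply: n2; split; lra.
  - have h2 : F ord0 x - F i1 x < 0 by nra.
    by apply: n1; split; lra.
  - by move: hx; rewrite h1 subrr mulr0 ltxx.
have cD1 : continuous D1.
  by move=> x; apply: cvgB; apply: affine_cont.
have cD2 : continuous D2.
  by move=> x; apply: cvgB; apply: affine_cont.
have Wopen : open [set x | D1 x * D2 x < 0].
  by apply: open_neg => x; apply: cvgM; [exact: cD1|exact: cD2].
have WI : [set x | D1 x * D2 x < 0] `<=` (P ord0)°.
  by rewrite -open_subsetE // => x; exact: W.
have [_ [[x0 hx0] [Pconn _]]] := Pp ord0.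
have [n1 n2] := nz x0 hx0.
have [oa ob] := onP x0 (interior_subset hx0).
have pr0 : D1 x0 * D2 x0 < 0.
  move: n1 n2; rewrite !neq_lt => /orP [] h1 /orP [] h2.
  - by exfalso; apply: oa.
  - nra.
  - nra.
  - by exfalso; apply: ob.
pose x1 := (2 * v.1 - x0.1, 2 * v.2 - x0.2).
have e1 : D1 x1 = - D1 x0 by rewrite /D1 /x1 !aff_refl // !fv; ring.
have e2 : D2 x1 = - D2 x0 by rewrite /D2 /x1 !aff_refl // !fv; ring.
have hx1 : (P ord0)° x1 by apply: WI; rewrite /= e1 e2 mulrNN.
have eqS : (P ord0)° `&` [set x | 0 < D1 x] = (P ord0)°.
  apply: Pconn.
  - case: (ltrP 0 (D1 x0)) => h.
      by exists x0.
    exists x1; split => //=; rewrite e1 oppr_gt0 lt_neqAle h andbT; exact: n1.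
  - by exists [set x | 0 < D1 x]; first exact: open_pos.
  - exists [set x | 0 <= D1 x]; first exact: closed_nneg.
    apply/seteqP; split => x [h1 h2]; split => //=; first exact: ltW.
    by rewrite /= lt_def (nz x h1).1 h2.
case: (ltrP 0 (D1 x0)) => h.
  have : ((P ord0)° `&` [set x | 0 < D1 x]) x1 by rewrite eqS.
  by move=> [_]; rewrite /= e1 oppr_gt0 ltNge (ltW h).
have : ((P ord0)° `&` [set x | 0 < D1 x]) x0 by rewrite eqS.
by move=> [_]; rewrite /= ltNge h.
Qed.

End Geo.

Lemma sc_signed (R : realType) (F : 'I_3 -> R * R -> R) g :
  @sc R (R * R) (F ord0) (F i1) (F i2) g -> signed_comp F g.
Proof.
move=> [e [he [h|[h|h]]]]; [exists ord0|exists i1|exists i2]; by exists e.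
Qed.

Theorem lemma4p4 (R : realType) (v : R * R) (f : R * R -> R)
    (P : 'I_3 -> set (R * R)) (F : 'I_3 -> R * R -> R) :
  v_function3 v f P F ->
  exists (s1 s2 : R) (g1 g2 g3 : R * R -> R),
    (s1 = 1 \/ s1 = -1) /\ (s2 = 1 \/ s2 = -1) /\
    signed_comp F g1 /\ signed_comp F g2 /\ signed_comp F g3 /\
    forall x, f x = s1 * Num.max (g1 x) (s2 * Num.max (g2 x) (g3 x)).
Proof.
move=> hv.
have hv' := hv; case: hv' => [fc [Pp [Pcov [Pint Faff]]]].
have cov : forall x, exists i, f x = F i x.
  move=> x; have : (\bigcup_(i in [set: 'I_3]) P i) x by rewrite Pcov.
  by case=> j _ Pj; exists j; exact: (Faff j).2.
have L := @selL R f F fc (fun i => (Faff i).1) cov.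
have c3 : @cov3 R _ f (F ord0) (F i1) (F i2).
  by move=> x; have [k hk] := cov x; case: (ord3 k) => [e|[e|e]]; rewrite hk e; tauto.
have l3 : @L3 R _ f (F ord0) (F i1) (F i2).
  by move=> x y; have [k hk] := L x y; case: (ord3 k) => [e|[e|e]]; rewrite e in hk; tauto.
have := @core R _ f _ _ _ c3 l3 (fun NA NB hy hz => @geo_contra R v f P F hv NA NB hy hz).
move=> [s1 [s2 [g1 [g2 [g3 [h1 [h2 [h3 [h4 [h5 h6]]]]]]]]]].
exists s1, s2, g1, g2, g3; do 2 split => //.
by do 3 (split; first exact: sc_signed).
Qed.
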